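(* Let $G$, $k\ge 3$, the choice strings $c_{i,j}$ ($1\le i<j\le k$), the $\binom{k}{2}-(k-1)$ template strings, $L$ and $d$ be as in the Consensus Patterns construction in the context. If $G$ has a clique of size $k$, then the constructed Consensus Patterns instance has a solution: there is a string $s\in\{0,1\}^L$ and, for each choice string and each template string, a substring of it of length $L$, such that the sum over all these strings of the Hamming distances between $s$ and the chosen substrings is at most $d$.
   Context: Let $G=(V,E)$ be an undirected simple graph with $V=\{v_1,\dots,v_n\}$ and edge set $E=\{e_1,\dots,e_m\}$, and let $k\ge 3$ be an integer. All strings are over $\{0,1\}$. For $1\le p\le n$ let $\mathrm{number}(p)=0^{p-1}10^{n-p}$. Let $\mathrm{front\_tag}=(1^{nk^3}0)^{nk^3}0^{nk^3}$ (length $n^2k^6+2nk^3$). For $1\le i<j\le k$ and an edge $e$ joining $v_r,v_s$ with $r<s$ let $\mathrm{encode}(i,j,e)=(0^n)^{i-1}\,\mathrm{number}(r)\,(0^n)^{j-i-1}\,\mathrm{number}(s)\,(0^n)^{k-j}$ and $\mathrm{block}(i,j,e)=\mathrm{front\_tag}\,\mathrm{encode}(i,j,e)$. The choice string is $c_{i,j}=\mathrm{block}(i,j,e_1)\cdots\mathrm{block}(i,j,e_m)$. There are $\binom{k}{2}-(k-1)$ template strings, each equal to $\mathrm{front\_tag}\,1^{nk}$. Set $L=n^2k^6+2nk^3+nk$ and $d=(\binom{k}{2}-(k-1))nk$. The Consensus Patterns instance consists of all choice strings and all template strings with these $L$ and $d$. Consensus Patterns asks for a string $s$ of length $L$ and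 a length-$L$ substring of each input string such that the sum of Hamming distances from $s$ to these substrings is at most $d$. *)

(* Defs.v *)
From mathcomp Require Import all_boot.
Set Implicit Arguments. Unset Strict Implicit. Unset Printing Implicit Defensive.

(* Binary strings are [seq bool] (true = 1, false = 0). *)

Definition front_tag (n k : nat) : seq bool :=
  let N := n * k ^ 3 in
  flatten (nseq N (nseq N true ++ [:: false])) ++ nseq N false.

(* number(p) = 0^{p-1} 1 0^{n-p}, for 1 <= p <= n *)
Definition number (n p : nat) : seq bool :=
  nseq p.-1 false ++ true :: nseq (n - p) false.

Definition zblock (n c : nat) : seq bool := flatten (nseq c (nseq n false)).

(* encode(i,j,e) for e = {v_r, v_s}, r < s (1-based indices) *)
Definition encode (n k i j r s : nat) : seq bool :=
  zblock n i.-1 ++ number n r ++ zblock n (j - i - 1) ++ number n s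
    ++ zblock n (k - j).

(* Vertices are 'I_n; vertex v : 'I_n is v_{v+1}. *)
Definition block (n k i j : nat) (e : 'I_n * 'I_n) : seq bool :=
  front_tag n k ++ encode n k i j (val e.1).+1 (val e.2).+1.

Definition choice_string (n k i j : nat) (E : seq ('I_n * 'I_n)) : seq bool :=
  flatten [seq block k i j e | e <- E].

Definition template_string (n k : nat) : seq bool :=
  front_tag n k ++ nseq (n * k) true.

Definition CP_L (n k : nat) : nat := n ^ 2 * k ^ 6 + 2 * n * k ^ 3 + n * k.
Definition CP_d (n k : nat) : nat := ('C(k, 2) - (k - 1)) * n * k.

(* all pairs 1 <= i < j <= k *)
Definition choice_pairs (k : nat) : seq (nat * nat) :=
  [seq (i, j) | i <- iota 1 k, j <- iota i.+1 (k - i)].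

Definition CP_instance (n k : nat) (E : seq ('I_n * 'I_n)) : seq (seq bool) :=
  [seq choice_string k p.1 p.2 E | p <- choice_pairs k]
    ++ nseq ('C(k, 2) - (k - 1)) (template_string n k).

Definition hamming (s t : seq bool) : nat :=
  count id [seq p.1 != p.2 | p <- zip s t].

Definition CP_solvable (inst : seq (seq bool)) (L d : nat) : Prop :=
  exists s : seq bool, size s = L /\
  exists pos : nat -> nat,
    (forall x, x < size inst -> pos x + L <= size (nth [::] inst x)) /\
    \sum_(x < size inst) hamming s (take L (drop (pos x) (nth [::] inst x)))
      <= d.

Definition edge_enum (n : nat) (G : rel 'I_n) (E : seq ('I_n * 'I_n)) : Prop :=
  uniq E /\ forall u v : 'I_n, ((u, v) \in E) = (u < v) && G u v.

Definition has_clique (n : nat) (G : rel 'I_n) (k : nat) : Prop :=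
  exists K : {set 'I_n}, #|K| = k /\ {in K &, forall u v, u != v -> G u v}.

(* Main.v *)
Require Import Defs.
From mathcomp Require Import all_boot.
From mathcomp Require Import zify.
From Stdlib Require Import Lia.
Set Implicit Arguments. Unset Strict Implicit. Unset Printing Implicit Defensive.

Lemma hamming_nil_l t : hamming [::] t = 0. Proof. by case: t. Qed.
Lemma hamming_cons a s b t : hamming (a :: s) (b :: t) = (a != b) + hamming s t.
Proof. by []. Qed.

Lemma hamming_cat a b c d : size a = size c ->
  hamming (a ++ b) (c ++ d) = hamming a c + hamming b d.
Proof.
by move=> h; rewrite /hamming zip_cat // map_cat count_cat.
Qed.

Lemma hamming_refl a : hamming a a = 0.
Proof. by elim: a => //= x a IH; rewrite hamming_cons eqxx IH. Qed.

Lemma hamming_false t m : size t = m -> hamming t (nseq m false) = count id t.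
Proof.
elim: t m => [|x t IH] [|m] //= [] h.
by rewrite hamming_cons IH //; case: x.
Qed.

Lemma hamming_true t m : size t = m -> hamming t (nseq m true) = m - count id t.
Proof.
elim: t m => [|x t IH] [|m] //= [] h.
rewrite hamming_cons IH //; case: x => /=; last by rewrite add1n subSn // -h count_size.
by rewrite add0n subSS.
Qed.

Lemma size_flatten_nseq T m (x : seq T) : size (flatten (nseq m x)) = m * size x.
Proof. by elim: m => //= m IH; rewrite size_cat IH mulSn. Qed.

Lemma zblockE n c : zblock n c = nseq (c * n) false.
Proof. by rewrite /zblock; elim: c => //= c IH; rewrite IH mulSn nseqD. Qed.

Lemma size_number n p : 1 <= p <= n -> size (Defs.number n p) = n.
Proof. move=> /andP[h1 h2]; rewrite /Defs.number size_cat /= !size_nseq; lia. Qed.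

Lemma count_number n p : count id (Defs.number n p) = 1.
Proof. by rewrite /Defs.number count_cat /= !count_nseq /= !mul0n. Qed.

Lemma size_front n k : size (front_tag n k) = (n * k ^ 3) * (n * k ^ 3) + 2 * (n * k ^ 3).
Proof.
rewrite /front_tag size_cat size_flatten_nseq size_cat !size_nseq /=. lia.
Qed.

Lemma size_encode n k i j r s : 1 <= i < j -> j <= k -> 1 <= r <= n -> 1 <= s <= n ->
  size (encode n k i j r s) = n * k.
Proof.
move=> /andP[h1 h2] h3 hr hs.
rewrite /encode !size_cat !zblockE /= !size_nseq; nia.
Qed.

Lemma L_eq n k : CP_L n k = (n * k ^ 3) * (n * k ^ 3) + 2 * (n * k ^ 3) + n * k.
Proof. rewrite /CP_L. rewrite !expnS !expn0. nia. Qed.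

Definition wenc n (u : seq 'I_n) := flatten [seq Defs.number n (val x).+1 | x <- u].

Lemma size_wenc n (u : seq 'I_n) : size (wenc u) = size u * n.
Proof.
rewrite /wenc; elim: u => //= x u IH; rewrite size_cat IH size_number ?mulSn //.
by rewrite ltn_ord.
Qed.

Lemma count_wenc n (u : seq 'I_n) : count id (wenc u) = size u.
Proof.
rewrite /wenc; elim: u => //= x u IH; by rewrite count_cat IH count_number.
Qed.

Lemma wenc_cat n (a b : seq 'I_n) : wenc (a ++ b) = wenc a ++ wenc b.
Proof. by rewrite /wenc map_cat flatten_cat. Qed.
Lemma wenc_cons n (x : 'I_n) a : wenc (x :: a) = Defs.number n (val x).+1 ++ wenc a.
Proof. by []. Qed.

Lemma ham_enc n k (u : seq 'I_n) x0 i j : size u = k -> 1 <= i < j -> j <= k ->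
  hamming (wenc u)
    (encode n k i j (val (nth x0 u i.-1)).+1 (val (nth x0 u j.-1)).+1) = k - 2.
Proof.
move=> su /andP[h1 h2] h3.
have E1 : u = take i.-1 u ++ nth x0 u i.-1 :: take (j - i - 1) (drop i u)
   ++ nth x0 u j.-1 :: drop j u.
  rewrite -[LHS](cat_take_drop i.-1).
  congr (_ ++ _).
  rewrite (drop_nth x0); last by lia.
  congr (_ :: _).
  rewrite prednK // -{1}(cat_take_drop (j - i - 1) (drop i u)).
  congr (_ ++ _).
  rewrite drop_drop (drop_nth x0); last by lia.
  have -> : j - i - 1 + i = j.-1 by lia.
  by rewrite prednK //; lia.
have sA : size (take i.-1 u) = i.-1 by rewrite size_takel //; lia.
have sB : size (take (j - i - 1) (drop i u)) = j - i - 1 by rewrite size_takel // size_drop; lia.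
have sC : size (drop j u) = k - j by rewrite size_drop su.
rewrite {1}E1 wenc_cat wenc_cons wenc_cat wenc_cons.
rewrite /encode !zblockE.
have szn : forall x : 'I_n, size (Defs.number n (val x).+1) = n.
  by move=> x; rewrite size_number // ltn_ord.
rewrite hamming_cat; last by rewrite size_wenc size_nseq sA.
rewrite hamming_cat ?szn //.
rewrite hamming_cat; last by rewrite size_wenc size_nseq sB.
rewrite hamming_cat ?szn //.
rewrite !hamming_refl !hamming_false ?size_wenc ?sA ?sB ?sC //.
rewrite !count_wenc sA sB sC; lia.
Qed.

Lemma take_drop_flatten L (bs : seq (seq bool)) m :
  all (fun b => size b == L) bs -> m < size bs ->
  take L (drop (m * L) (flatten bs)) = nth [::] bs m.
Proof.
elim: bs m => [|b bs IH] [|m] //= /andP[/eqP hb hall] hm.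
  by rewrite drop0 take_size_cat.
rewrite drop_cat hb mulSn ltnNge leq_addr /= addKn. exact: IH.
Qed.

Lemma sumn_shift k (s : seq nat) : all (fun x => x <= k) s ->
  sumn [seq k.+1 - x | x <- s] = sumn [seq k - x | x <- s] + size s.
Proof.
elim: s => //= x s IH /andP[hx hs]; rewrite IH //. lia.
Qed.

Lemma size_cp k : size (choice_pairs k) = 'C(k, 2).
Proof.
rewrite /choice_pairs size_allpairs_dep.
rewrite (eq_map (g := fun x => k - x)); last by move=> x /=; rewrite size_iota.
elim: k => // k IH.
rewrite -addn1 iotaD map_cat sumn_cat /= add1n addn1 subnn !addn0.
rewrite sumn_shift; last first.
  by apply/allP => x; rewrite mem_iota; lia.
by rewrite IH size_iota binS bin1.
Qed.

Lemma mem_cp k p : p \in choice_pairs k -> 1 <= p.1 /\ p.1 < p.2 /\ p.2 <= k.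
Proof.
case/allpairsPdep => i [j [hi hj ->]] /=.
move: hi hj; rewrite !mem_iota; lia.
Qed.

Lemma size_flatten_const L (bs : seq (seq bool)) :
  all (fun b => size b == L) bs -> size (flatten bs) = size bs * L.
Proof. elim: bs => //= b bs IH /andP[/eqP hb h]; by rewrite size_cat IH // hb. Qed.

Lemma bin2_double k : 'C(k, 2) * 2 = k * (k - 1).
Proof. elim: k => // k IH; rewrite binS bin1 mulnDl IH; nia. Qed.

Theorem proposition5 (n k : nat) (G : rel 'I_n) (E : seq ('I_n * 'I_n)) :
  symmetric G -> irreflexive G -> 3 <= k -> edge_enum G E ->
  has_clique G k ->
  CP_solvable (CP_instance k E) (CP_L n k) (CP_d n k).
Proof.
move=> Gsym Girr k3 [Euniq Emem] [K [cardK cliq]].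
have kn : k <= n by rewrite -cardK -[X in _ <= X]card_ord max_card.
have n0 : 0 < n by lia.
pose x0 : 'I_n := Ordinal n0.
pose u := sort (fun a b : 'I_n => val a <= val b) (enum K).
have su : size u = k by rewrite size_sort -cardE.
have uK : forall x, (x \in u) = (x \in K) by move=> x; rewrite mem_sort mem_enum.
have uinK : forall a, a < k -> nth x0 u a \in K by move=> a ha; rewrite -uK mem_nth ?su.
have usort : forall a b, a < b < k -> val (nth x0 u a) < val (nth x0 u b).
  move=> a b /andP[hab hb].
  have hs : sorted ltn (map val u).
    rewrite ltn_sorted_uniq_leq; apply/andP; split.
      by rewrite (map_inj_uniq val_inj) sort_uniq enum_uniq.
    rewrite sorted_map; apply: sort_sorted => x y; exact: leq_total.
  rewrite -!(nth_map x0 0) ?su; try lia.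
  apply: (sorted_ltn_nth ltn_trans 0 hs); rewrite ?inE ?size_map ?su //; lia.
pose edge (p : nat * nat) := (nth x0 u p.1.-1, nth x0 u p.2.-1).
have edgeE : forall p, p \in choice_pairs k -> edge p \in E.
  move=> [a b] /mem_cp /= [h1 [h2 h3]].
  rewrite Emem /edge /=.
  have lt : val (nth x0 u a.-1) < val (nth x0 u b.-1) by apply: usort; lia.
  rewrite lt /=; apply: cliq.
  - by apply: uinK; lia.
  - by apply: uinK; lia.
  - by apply/negP => /eqP eq; move: lt; rewrite eq ltnn.
pose cp := choice_pairs k.
pose P := size cp.
pose T := 'C(k, 2) - (k - 1).
pose Lv := CP_L n k.
have sizeL : size (front_tag n k) + n * k = Lv by rewrite size_front /Lv L_eq.
exists (front_tag n k ++ wenc u); split.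
  by rewrite size_cat size_wenc su [k * n]mulnC sizeL.
exists (fun x => if x < P then index (edge (nth (0,0) cp x)) E * Lv else 0).
have sinst : size (CP_instance k E) = P + T by rewrite /CP_instance size_cat size_map size_nseq.
have nthI : forall x, x < P + T -> nth [::] (CP_instance k E) x =
   if x < P then choice_string k (nth (0,0) cp x).1 (nth (0,0) cp x).2 E
   else template_string n k.
  move=> x hx; rewrite /CP_instance nth_cat size_map -/cp -/P.
  case: ifP => hxP; first by rewrite (nth_map (0,0)).
  by rewrite nth_nseq; case: ifP => //; lia.
have blk : forall p, p \in cp -> all (fun b => size b == Lv) [seq block k p.1 p.2 e | e <- E].
  move=> [a b] /mem_cp /= [h1 [h2 h3]]; apply/allP => c /mapP [e _ ->].
  rewrite /block size_cat size_encode ?sizeL ?eqxx //; try lia; by rewrite /= ltn_ord.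
have key : forall x, x < P -> 
   let p := nth (0,0) cp x in
   take Lv (drop (index (edge p) E * Lv) (choice_string k p.1 p.2 E)) = block k p.1 p.2 (edge p).
  move=> x hx p.
  have pin : p \in cp by rewrite mem_nth.
  rewrite /choice_string take_drop_flatten ?blk //; last by rewrite size_map index_mem edgeE.
  by rewrite (nth_map (x0, x0)) ?index_mem ?edgeE // nth_index // edgeE.
split.
  move=> x; rewrite sinst => hx; rewrite nthI //.
  case: ifP => hxP.
    set p := nth (0,0) cp x.
    have pin : p \in cp by rewrite mem_nth.
    rewrite /choice_string (size_flatten_const (blk _ pin)) size_map -mulSnr leq_mul2r.
    by rewrite index_mem edgeE ?orbT.
  by rewrite /template_string size_cat size_nseq add0n sizeL.
rewrite -/Lv.
apply: (@leq_trans (\sum_(x < size (CP_instance k E)) (if x < P then k - 2 else n * k - k))).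
  apply: leq_sum => x _.
  have hx : x < P + T by rewrite -sinst.
  rewrite nthI //; case: ifP => hxP.
    have pin : nth (0,0) cp x \in cp by rewrite mem_nth.
    have [h1 [h2 h3]] := mem_cp pin.
    rewrite key // /block hamming_cat // hamming_refl ham_enc //.
    by apply/andP.
  rewrite drop0 /template_string take_oversize; last by rewrite size_cat size_nseq sizeL.
  rewrite hamming_cat // hamming_refl hamming_true; last by rewrite size_wenc su mulnC.
  by rewrite count_wenc su.
rewrite -(big_mkord xpredT (fun x => if x < P then k - 2 else n * k - k)) sinst.
rewrite (@big_cat_nat _ _ _ P) //; last by rewrite leq_addr.
rewrite (eq_big_nat _ _ (F2 := fun _ => k - 2)); last by move=> i /andP[_ h]; rewrite h.
rewrite (eq_big_nat _ _ (F1 := fun x => if x < P then k - 2 else n * k - k) (F2 := fun _ => n * k - k) (m := P)); last by move=> i /andP[h _]; rewrite ltnNge h.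
rewrite !sum_nat_const_nat /CP_d /P size_cp /T.
move: (bin2_double k) k3 kn; set c := 'C(k, 2); rewrite /=; clear; move=> hC k3 kn.
nia.
Qed.
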